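(* Let $E,F\subseteq\mathbb{R}$ be Lebesgue-measurable and let $m:E\to F$ be a bijection which is strictly increasing and measure-preserving (with respect to Lebesgue measure). Then $m^{-1}$ is also strictly increasing and measure-preserving; that is, $m\in\mathbb{MO}(E,F)$.
   Context: A map $m:E\to F$ is measure-preserving if for every Lebesgue-measurable $A\subseteq F$, $m^{-1}(A)$ is Lebesgue-measurable and $\lambda(m^{-1}(A))=\lambda(A)$. $\mathbb{MO}(E,F)$ is the set of strictly increasing bijections $m:E\to F$ such that both $m$ and $m^{-1}$ are measure-preserving. *)

(* Defs.v *)
From Stdlib Require Import Reals ClassicalEpsilon.
Open Scope R_scope.

(* Extended nonnegative reals [0,+oo] (finite part only used for values >= 0). *)
Inductive ereal : Type := Fin (r : R) | PInf.

Definition ele (x y : ereal) : Prop :=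
  match x, y with
  | Fin a, Fin b => a <= b
  | _, PInf => True
  | PInf, Fin _ => False
  end.

Definition eadd (x y : ereal) : ereal :=
  match x, y with
  | Fin a, Fin b => Fin (a + b)
  | _, _ => PInf
  end.

Definition series_sum (u : nat -> R) (v : ereal) : Prop :=
  match v with
  | Fin l => Un_cv (fun N => sum_f_R0 u N) l
  | PInf => ~ exists l, Un_cv (fun N => sum_f_R0 u N) l
  end.

Definition cover_length (A : R -> Prop) (v : ereal) : Prop :=
  exists a b : nat -> R,
    (forall n, a n <= b n) /\
    (forall x, A x -> exists n, a n <= x <= b n) /\
    series_sum (fun n => b n - a n) v.

Definition is_outer_measure (A : R -> Prop) (v : ereal) : Prop :=
  (forall w, cover_length A w -> ele v w) /\
  (forall u, (forall w, cover_length A w -> ele u w) -> ele u v).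

(* Lebesgue outer measure (the infimum exists, so this picks it). *)
Definition lambda (A : R -> Prop) : ereal :=
  epsilon (inhabits PInf) (is_outer_measure A).

Definition measurable (A : R -> Prop) : Prop :=
  forall T : R -> Prop,
    lambda T = eadd (lambda (fun x => T x /\ A x)) (lambda (fun x => T x /\ ~ A x)).

(* m : E -> F (represented by a function R -> R) is measure-preserving:
   for every Lebesgue-measurable A contained in F, the preimage
   m^{-1}(A) = {x in E | m x in A} is measurable and has the same measure. *)
Definition measure_preserving (E F : R -> Prop) (m : R -> R) : Prop :=
  forall A : R -> Prop,
    measurable A -> (forall y, A y -> F y) ->
    measurable (fun x => E x /\ A (m x)) /\
    lambda (fun x => E x /\ A (m x)) = lambda A.

Definition strictly_increasing_on (E : R -> Prop) (m : R -> R) : Prop :=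
  forall x y, E x -> E y -> x < y -> m x < m y.

Definition bijection_on (E F : R -> Prop) (m : R -> R) : Prop :=
  (forall x, E x -> F (m x)) /\
  (forall x y, E x -> E y -> m x = m y -> x = y) /\
  (forall y, F y -> exists x, E x /\ m x = y).

Definition inverse_on (E F : R -> Prop) (m minv : R -> R) : Prop :=
  forall y, F y -> E (minv y) /\ m (minv y) = y.

Definition MO (E F : R -> Prop) (m : R -> R) : Prop :=
  bijection_on E F m /\ strictly_increasing_on E m /\
  measure_preserving E F m /\
  exists minv, inverse_on E F m minv /\ measure_preserving F E minv.

(* Main.v *)
Require Import Defs.
From Stdlib Require Import Reals Lra Lia ClassicalEpsilon Classical FunctionalExtensionality PropExtensionality.
Open Scope R_scope.

Lemma set_ext (A B : R -> Prop) : (forall x, A x <-> B x) -> A = B.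
Proof. intros H; apply functional_extensionality; intro x; apply propositional_extensionality; apply H. Qed.

Lemma ele_antisym x y : ele x y -> ele y x -> x = y.
Proof. destruct x, y; simpl; intros; try tauto. f_equal; lra. Qed.

Lemma eadd_mono x y x' y' : ele x x' -> ele y y' -> ele (eadd x y) (eadd x' y').
Proof. destruct x, y, x', y'; simpl; intros; try tauto; lra. Qed.

Lemma eadd_assoc x y z : eadd x (eadd y z) = eadd (eadd x y) z.
Proof. destruct x, y, z; simpl; auto. f_equal; ring. Qed.

Lemma lim_le u l B : Un_cv u l -> (forall n, u n <= B) -> l <= B.
Proof.
  intros Hc Hb. destruct (Rle_lt_dec l B) as [h|h]; auto.
  destruct (Hc (l - B)) as [N HN]; [lra|].
  specialize (HN N (le_n N)). specialize (Hb N). unfold Rdist in HN.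
  apply Rabs_def2 in HN. lra.
Qed.

Lemma psum_growing u : (forall n, 0 <= u n) -> Un_growing (fun N => sum_f_R0 u N).
Proof. intros H n. rewrite tech5. specialize (H (S n)). lra. Qed.

Lemma series_conv u B : (forall n, 0 <= u n) -> (forall N, sum_f_R0 u N <= B) ->
  exists l, Un_cv (fun N => sum_f_R0 u N) l /\ l <= B.
Proof.
  intros H0 HB. destruct (growing_cv (fun N => sum_f_R0 u N)) as [l Hl].
  - apply psum_growing; auto.
  - exists B. intros x [i ->]. auto.
  - exists l; split; auto. eapply lim_le; eauto.
Qed.

Lemma psum_le_lim u l N : (forall n, 0 <= u n) -> Un_cv (fun N => sum_f_R0 u N) l -> sum_f_R0 u N <= l.
Proof. intros H Hc. apply (growing_ineq (fun N => sum_f_R0 u N)); auto. apply psum_growing; auto. Qed.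

Lemma cover_nonneg A w : cover_length A (Fin w) -> 0 <= w.
Proof.
  intros (a & b & Hab & _ & Hs). simpl in Hs.
  assert (H := psum_le_lim (fun n => b n - a n) w 0 ltac:(intro n; specialize (Hab n); lra) Hs).
  simpl in H. specialize (Hab 0%nat). lra.
Qed.

Lemma outer_exists A : exists v, is_outer_measure A v.
Proof.
  destruct (classic (exists w, cover_length A (Fin w))) as [[w0 Hw0]|Hno].
  - set (Ep := fun z => exists w, cover_length A (Fin w) /\ z = - w).
    destruct (completeness Ep) as [M [HM1 HM2]].
    + exists 0. intros z [w [Hw ->]]. apply cover_nonneg in Hw. lra.
    + exists (- w0); exists w0; auto.
    + exists (Fin (- M)). split.
      * intros [w|] Hw; simpl; auto.
        assert (- w <= M) by (apply HM1; exists w; auto). lra.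
      * intros [r|] Hu; simpl.
        -- assert (M <= - r). { apply HM2. intros z [w [Hw ->]]. specialize (Hu _ Hw). simpl in Hu. lra. }
           lra.
        -- specialize (Hu _ Hw0). simpl in Hu. auto.
  - exists PInf. split.
    + intros [w|] Hw; simpl; auto. apply Hno; eauto.
    + intros [r|] _; simpl; auto.
Qed.

Lemma lambda_spec A : is_outer_measure A (lambda A).
Proof.
  unfold lambda. apply epsilon_spec. apply outer_exists.
Qed.

Lemma lambda_le_cover A w : cover_length A w -> ele (lambda A) w.
Proof. intro H. apply (proj1 (lambda_spec A)); auto. Qed.

Lemma lambda_glb A u : (forall w, cover_length A w -> ele u w) -> ele u (lambda A).
Proof. intro H. apply (proj2 (lambda_spec A)); auto. Qed.

Lemma lambda_nonneg A : ele (Fin 0) (lambda A).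
Proof. apply lambda_glb. intros [w|] Hw; simpl; auto. apply cover_nonneg in Hw; auto. Qed.

Lemma lambda_approx A r eps : lambda A = Fin r -> 0 < eps ->
  exists w, cover_length A (Fin w) /\ w < r + eps.
Proof.
  intros Hr He. apply NNPP. intro Hn.
  assert (H : ele (Fin (r + eps)) (lambda A)).
  { apply lambda_glb. intros [w|] Hw; simpl; auto.
    destruct (Rlt_le_dec w (r + eps)) as [h|h]; auto. exfalso; apply Hn; eauto. }
  rewrite Hr in H. simpl in H. lra.
Qed.

Lemma interval_cover A p q : p <= q -> (forall x, A x -> p <= x <= q) -> cover_length A (Fin (q - p)).
Proof.
  intros Hpq HA.
  exists (fun n => match n with O => p | _ => 0 end), (fun n => match n with O => q | _ => 0 end).
  split; [intros [|n]; lra|]. split.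
  - intros x Hx. exists O. auto.
  - simpl. intros eps He. exists O. intros n _. unfold Rdist.
    replace (sum_f_R0 _ n) with (q - p).
    + rewrite Rminus_diag, Rabs_R0; auto.
    + induction n; simpl; auto. rewrite <- IHn. ring.
Qed.

Lemma lambda_interval A p q : p <= q -> (forall x, A x -> p <= x <= q) -> ele (lambda A) (Fin (q - p)).
Proof. intros; apply lambda_le_cover, interval_cover; auto. Qed.

Fixpoint sm (f : nat -> R) (N : nat) : R :=
  match N with O => 0 | S N' => sm f N' + f N' end.

Lemma sm_sum f N : sm f (S N) = sum_f_R0 f N.
Proof. induction N; simpl in *; auto. ring. rewrite <- IHN. simpl. ring. Qed.

Lemma sm_ext f h N : (forall n, (n < N)%nat -> f n = h n) -> sm f N = sm h N.
Proof. induction N; simpl; intros; auto. rewrite IHN by (intros; apply H; lia). rewrite H by lia. auto. Qed.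

Lemma sm_plus f h N : sm (fun n => f n + h n) N = sm f N + sm h N.
Proof. induction N; simpl; [ring|]. rewrite IHN; ring. Qed.

Lemma sm_le f h N : (forall n, (n < N)%nat -> f n <= h n) -> sm f N <= sm h N.
Proof. induction N; simpl; intros; [lra|]. assert (f N <= h N) by (apply H; lia).
  assert (sm f N <= sm h N) by (apply IHN; intros; apply H; lia). lra. Qed.

Lemma sm_mono f N M : (forall n, 0 <= f n) -> (N <= M)%nat -> sm f N <= sm f M.
Proof. intros H HNM. induction HNM; [lra|]. simpl. specialize (H m). lra. Qed.

Fixpoint enum (i : nat) : nat * nat :=
  match i with
  | O => (O, O)
  | S i' => let (n, k) := enum i' in
            match k with O => (O, S n) | S k' => (S n, k') end
  end.

Lemma enum_surj : forall j n, (n <= j)%nat -> exists i, enum i = (n, (j - n)%nat).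
Proof.
  induction j.
  - intros n Hn. exists O. replace n with O by lia. auto.
  - induction n; intros Hn.
    + destruct (IHj j (le_n j)) as [i Hi]. exists (S i). simpl. rewrite Hi.
      replace (j - j)%nat with O by lia. f_equal.
    + destruct (IHn ltac:(lia)) as [i Hi]. exists (S i). simpl. rewrite Hi.
      destruct (S j - n)%nat eqn:E; [lia|]. f_equal. lia.
Qed.

Section Enum.
Variable g : nat -> nat -> R.
Definition Dg (j : nat) := sm (fun n => g n (j - n)%nat) (S j).

Lemma enum_sum : forall i, let (n, k) := enum i in
  sm (fun i' => let (a, b) := enum i' in g a b) (S i) =
  sm Dg (n + k)%nat + sm (fun n' => g n' (n + k - n')%nat) (S n).
Proof.
  induction i.
  - simpl. ring.
  - assert (Hs : sm (fun i' => let (a, b) := enum i' in g a b) (S (S i)) =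
       sm (fun i' => let (a, b) := enum i' in g a b) (S i) + (let (a, b) := enum (S i) in g a b)) by reflexivity.
    rewrite Hs. clear Hs.
    destruct (enum i) as [n k] eqn:E.
    assert (E2 : enum (S i) = match k with O => (O, S n) | S k' => (S n, k') end) by (simpl; rewrite E; auto).
    rewrite E2, IHi. destruct k as [|k'].
    + rewrite Nat.add_0_r, Nat.add_0_l.
      change (sm Dg (S n)) with (sm Dg n + Dg n). unfold Dg. simpl (sm _ 1). try rewrite Nat.sub_0_r.
      replace (sm (fun n' => g n' (n + 0 - n')%nat) (S n)) with (sm (fun n' => g n' (n - n')%nat) (S n)).
      ring. apply sm_ext; intros; f_equal; lia.
    + replace (S n + k')%nat with (n + S k')%nat by lia.
      simpl sm. replace (n + S k' - S n)%nat with k' by lia. ring.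
Qed.

Lemma triangle : forall J, sm Dg (S J) = sm (fun n => sm (g n) (S (J - n))) (S J).
Proof.
  induction J.
  - unfold Dg. simpl. ring.
  - change (sm Dg (S (S J))) with (sm Dg (S J) + Dg (S J)). rewrite IHJ.
    change (sm (fun n => sm (g n) (S (S J - n))) (S (S J))) with
      (sm (fun n => sm (g n) (S (S J - n))) (S J) + sm (g (S J)) (S (S J - S J))).
    rewrite (sm_ext (fun n => sm (g n) (S (S J - n))) (fun n => sm (g n) (S (J - n)) + g n (S J - n)%nat)).
    2:{ intros n Hn. replace (S J - n)%nat with (S (J - n)) by lia. simpl. auto. }
    rewrite sm_plus. unfold Dg at 1.
    change (sm (fun n => g n (S J - n)%nat) (S (S J))) with
      (sm (fun n => g n (S J - n)%nat) (S J) + g (S J) (S J - S J)%nat).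
    rewrite Nat.sub_diag. change (sm (g (S J)) 1) with (0 + g (S J) O). ring.
Qed.
End Enum.

Lemma geom_sum eps J : sm (fun n => eps / 2 ^ (S n)) (S J) = eps - eps / 2 ^ (S J).
Proof.
  induction J.
  - simpl. field.
  - change (sm (fun n => eps / 2 ^ S n) (S (S J))) with (sm (fun n => eps / 2 ^ S n) (S J) + eps / 2 ^ (S (S J))).
    rewrite IHJ. simpl. field. apply pow_nonzero. lra.
Qed.

Lemma count_subadd (X : R -> Prop) (A : nat -> R -> Prop) (c : nat -> R) (w : R) :
  (forall x, X x -> exists n, A n x) ->
  (forall n, ele (lambda (A n)) (Fin (c n))) ->
  Un_cv (fun N => sum_f_R0 c N) w ->
  ele (lambda X) (Fin w).
Proof.
  intros Hcov Hc Hw.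
  assert (Hc0 : forall n, 0 <= c n).
  { intro n. specialize (Hc n). assert (H := lambda_nonneg (A n)).
    destruct (lambda (A n)); simpl in *; lra. }
  assert (Heps : forall eps, 0 < eps -> ele (lambda X) (Fin (w + eps))).
  { intros eps He.
    assert (Hch : forall n, exists ab : (nat -> R) * (nat -> R) * R,
       let '(a, b, W) := ab in
       (forall k, a k <= b k) /\ (forall x, A n x -> exists k, a k <= x <= b k) /\
       Un_cv (fun N => sum_f_R0 (fun k => b k - a k) N) W /\ W <= c n + eps / 2 ^ (S n)).
    { intro n. specialize (Hc n). destruct (lambda (A n)) as [r|] eqn:Er; [|simpl in Hc; tauto].
      destruct (lambda_approx (A n) r (eps / 2 ^ S n) Er) as [W [(a & b & H1 & H2 & H3) HW]].
      { apply Rdiv_lt_0_compat; auto. apply pow_lt; lra. }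
      exists (a, b, W). simpl in Hc. repeat split; auto. lra. }
    apply choice in Hch. destruct Hch as [f Hf].
    set (a2 := fun n => fst (fst (f n))). set (b2 := fun n => snd (fst (f n))).
    set (W := fun n => snd (f n)).
    assert (Hf' : forall n, (forall k, a2 n k <= b2 n k) /\ (forall x, A n x -> exists k, a2 n k <= x <= b2 n k) /\
       Un_cv (fun N => sum_f_R0 (fun k => b2 n k - a2 n k) N) (W n) /\ W n <= c n + eps / 2 ^ (S n)).
    { intro n. specialize (Hf n). unfold a2, b2, W. destruct (f n) as [[a b] V]. exact Hf. }
    set (g := fun n k => b2 n k - a2 n k).
    assert (Hg0 : forall n k, 0 <= g n k) by (intros n k; unfold g; destruct (Hf' n) as [H _]; specialize (H k); lra).
    set (u := fun i => let (n, k) := enum i in g n k).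
    assert (Hu0 : forall i, 0 <= u i) by (intro i; unfold u; destruct (enum i); auto).
    assert (Hbound : forall N, sum_f_R0 u N <= w + eps).
    { intro N. rewrite <- sm_sum. assert (HE := enum_sum g N). destruct (enum N) as [n k] eqn:E.
      unfold u. rewrite HE.
      apply Rle_trans with (sm (Dg g) (S (n + k))).
      { change (sm (Dg g) (S (n + k))) with (sm (Dg g) (n + k) + Dg g (n + k)).
        apply Rplus_le_compat_l. unfold Dg.
        apply sm_mono; [intros; auto | lia]. }
      rewrite triangle.
      apply Rle_trans with (sm (fun n0 => c n0 + eps / 2 ^ S n0) (S (n + k))).
      { apply sm_le. intros n0 _. destruct (Hf' n0) as (H1 & _ & H3 & H4).
        rewrite sm_sum. eapply Rle_trans; [|apply H4].
        apply psum_le_lim; auto. }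
      rewrite sm_plus, geom_sum, sm_sum.
      assert (sum_f_R0 c (n + k) <= w) by (apply psum_le_lim; auto).
      assert (0 < eps / 2 ^ S (n + k)) by (apply Rdiv_lt_0_compat; auto; apply pow_lt; lra).
      lra. }
    destruct (series_conv u (w + eps) Hu0 Hbound) as [L [HL HLb]].
    assert (Hcl : cover_length X (Fin L)).
    { exists (fun i => let (n, k) := enum i in a2 n k), (fun i => let (n, k) := enum i in b2 n k).
      split; [intro i; destruct (enum i); apply (Hf' n)|]. split.
      - intros x Hx. destruct (Hcov x Hx) as [n Hn]. destruct (proj1 (proj2 (Hf' n)) x Hn) as [k Hk].
        destruct (enum_surj (n + k) n ltac:(lia)) as [i Hi]. exists i. rewrite Hi.
        replace (n + k - n)%nat with k by lia. auto.
      - simpl. eapply Un_cv_ext; [|exact HL]. intro N. apply sum_eq. intros i _. unfold u, g. destruct (enum i); auto. }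
    apply lambda_le_cover in Hcl. destruct (lambda X); simpl in *; lra. }
  destruct (lambda X) as [r|] eqn:ES.
  - simpl. destruct (Rle_lt_dec r w) as [h|h]; auto.
    specialize (Heps ((r - w) / 2) ltac:(lra)). simpl in Heps. lra.
  - specialize (Heps 1 Rlt_0_1). simpl in Heps. auto.
Qed.

Lemma eadd_comm x y : eadd x y = eadd y x.
Proof. destruct x, y; simpl; auto. f_equal; ring. Qed.

Lemma lambda_empty_le : ele (lambda (fun _ => False)) (Fin 0).
Proof. replace 0 with (0 - 0) by ring. apply lambda_interval; [lra| tauto]. Qed.

Lemma fin_subadd (T A B : R -> Prop) : (forall x, T x -> A x \/ B x) ->
  ele (lambda T) (eadd (lambda A) (lambda B)).
Proof.
  intro Hc. destruct (lambda A) as [r1|] eqn:E1; [|simpl; destruct (lambda T); simpl; auto].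
  destruct (lambda B) as [r2|] eqn:E2; [|simpl; destruct (lambda T); simpl; auto].
  simpl.
  set (Aseq := fun n => match n with O => A | 1%nat => B | _ => fun _ => False end).
  set (c := fun n => match n with O => r1 | 1%nat => r2 | _ => 0 end).
  apply (count_subadd T Aseq c).
  - intros x Hx. destruct (Hc x Hx); [exists O | exists 1%nat]; auto.
  - intros [|[|n]]; simpl. rewrite E1; simpl; lra. rewrite E2; simpl; lra. apply lambda_empty_le.
  - intros eps He. exists 1%nat. intros n Hn. unfold Rdist.
    replace (sum_f_R0 c n) with (r1 + r2). rewrite Rminus_diag, Rabs_R0; auto.
    induction Hn. simpl; ring. rewrite tech5, <- IHHn. destruct m; [lia|]. simpl. ring.
Qed.

Lemma minmax_facts p q c : p <= q ->
  0 <= Rmin q c - Rmin p c /\ 0 <= Rmax q c - Rmax p c /\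
  (Rmin q c - Rmin p c) + (Rmax q c - Rmax p c) = q - p.
Proof. intro H. unfold Rmin, Rmax. repeat destruct Rle_dec; lra. Qed.

Lemma cut_meas (H : R -> Prop) :
  (forall p q, p <= q -> exists c, (forall x, p <= x <= q -> c < x -> H x) /\
                                  (forall x, p <= x <= q -> x < c -> ~ H x)) ->
  measurable H.
Proof.
  intros Hcut T. apply ele_antisym.
  - apply fin_subadd. intros x Hx. destruct (classic (H x)); auto.
  - apply lambda_glb. intros [l|] Hw; [|destruct (eadd _ _); simpl; auto].
    destruct Hw as (a & b & Hab & Hcov & Hs). simpl in Hs.
    assert (Hch : forall n, exists c, (forall x, a n <= x <= b n -> c < x -> H x) /\
                                  (forall x, a n <= x <= b n -> x < c -> ~ H x)) by (intro; apply Hcut; auto).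
    apply choice in Hch. destruct Hch as [c Hc].
    set (u1 := fun n => Rmin (b n) (c n) - Rmin (a n) (c n)).
    set (u2 := fun n => Rmax (b n) (c n) - Rmax (a n) (c n)).
    assert (Hu : forall n, 0 <= u1 n /\ 0 <= u2 n /\ u1 n + u2 n = b n - a n)
      by (intro n; apply minmax_facts; auto).
    assert (Hl : forall N, sum_f_R0 (fun n => b n - a n) N <= l)
      by (intro; apply psum_le_lim; auto; intro n; specialize (Hab n); lra).
    destruct (series_conv u1 l) as [L1 [HL1 _]];
      [intro n; apply Hu| intro N; eapply Rle_trans; [|apply (Hl N)]; apply sum_Rle; intros n _; destruct (Hu n) as (?&?&?); lra|].
    destruct (series_conv u2 l) as [L2 [HL2 _]];
      [intro n; apply Hu| intro N; eapply Rle_trans; [|apply (Hl N)]; apply sum_Rle; intros n _; destruct (Hu n) as (?&?&?); lra|].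
    assert (Hsum : L1 + L2 = l).
    { apply (UL_sequence (fun N => sum_f_R0 (fun n => b n - a n) N)); auto.
      eapply Un_cv_ext; [|apply (CV_plus _ _ _ _ HL1 HL2)]. intro N. simpl.
      rewrite <- plus_sum. apply sum_eq. intros n _. apply Hu. }
    rewrite <- Hsum. rewrite (eadd_comm (lambda _)).
    change (Fin (L1 + L2)) with (eadd (Fin L1) (Fin L2)).
    apply eadd_mono; apply lambda_le_cover.
    + exists (fun n => Rmin (a n) (c n)), (fun n => Rmin (b n) (c n)). split; [|split].
      * intro n; destruct (minmax_facts (a n) (b n) (c n) (Hab n)) as (?&?&?); lra.
      * intros x [Tx Hx]. destruct (Hcov x Tx) as [n Hn]. exists n.
        assert (x <= c n). { destruct (Rle_lt_dec x (c n)); auto. exfalso; apply Hx, (proj1 (Hc n)); auto. }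
        split; [eapply Rle_trans; [apply Rmin_l|]; lra | apply Rmin_glb; lra].
      * exact HL1.
    + exists (fun n => Rmax (a n) (c n)), (fun n => Rmax (b n) (c n)). split; [|split].
      * intro n; destruct (minmax_facts (a n) (b n) (c n) (Hab n)) as (?&?&?); lra.
      * intros x [Tx Hx]. destruct (Hcov x Tx) as [n Hn]. exists n.
        assert (c n <= x). { destruct (Rle_lt_dec (c n) x); auto. exfalso; apply ((proj2 (Hc n)) x); auto. }
        split; [apply Rmax_lub; lra | eapply Rle_trans; [|apply Rmax_l]; lra].
      * exact HL2.
Qed.

Lemma upclosed_meas (H : R -> Prop) : (forall x y, x <= y -> H x -> H y) -> measurable H.
Proof.
  intro Hup. apply cut_meas. intros p q Hpq.
  destruct (classic (H p)) as [Hp|Hp].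
  { exists p. split; [intros x Hx _; apply (Hup p x); [lra|auto] | intros x Hx Hlt; lra]. }
  destruct (classic (H q)) as [Hq|Hq].
  2:{ exists q. split; [intros x Hx Hlt; lra | intros x Hx _ Hhx; apply Hq, (Hup x); auto; lra]. }
  set (Z := fun x => ~ H x /\ x <= q).
  destruct (completeness Z) as [M [HM1 HM2]].
  { exists q. intros z [_ Hz]; auto. }
  { exists p; split; auto. }
  exists M. split.
  - intros x Hx HMx. apply NNPP. intro Hn. assert (x <= M) by (apply HM1; split; auto; lra). lra.
  - intros x Hx HxM Hhx. assert (M <= x); [|lra].
    apply HM2. intros z [Hz Hzq]. destruct (Rle_lt_dec x z) as [h|h]; [|lra].
    exfalso. apply Hz, (Hup x); auto.
Qed.

Lemma compl_meas A : measurable A -> measurable (fun x => ~ A x).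
Proof.
  intros HA T. rewrite (HA T), eadd_comm. f_equal. f_equal. apply set_ext. intro x. split.
  - intros [? ?]; split; auto.
  - intros [? ?]; split; auto. apply NNPP; auto.
Qed.

Lemma inter_meas A B : measurable A -> measurable B -> measurable (fun x => A x /\ B x).
Proof.
  intros HA HB T. rewrite (HA T).
  rewrite (HB (fun x => T x /\ A x)).
  rewrite (HA (fun x => T x /\ ~ (A x /\ B x))).
  rewrite <- eadd_assoc. f_equal.
  - f_equal. apply set_ext; intro x; tauto.
  - f_equal; f_equal; apply set_ext; intro x; tauto.
Qed.

Lemma downclosed_meas (H : R -> Prop) : (forall x y, x <= y -> H y -> H x) -> measurable H.
Proof.
  intro Hd. assert (E : H = fun x => ~ ~ H x) by (apply set_ext; intro; split; [tauto| apply NNPP]).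
  rewrite E. apply compl_meas, upclosed_meas. intros x y Hxy Hx Hy. apply Hx, (Hd x y); auto.
Qed.

Definition img (m : R -> R) (S : R -> Prop) := fun y => exists x, S x /\ m x = y.

Lemma interval_meas p q : measurable (fun y => p <= y /\ y <= q).
Proof.
  apply inter_meas; [apply upclosed_meas | apply downclosed_meas]; intros; lra.
Qed.

Lemma main_lemma (E F : R -> Prop) (m : R -> R) :
  measurable F -> bijection_on E F m -> strictly_increasing_on E m ->
  measure_preserving E F m ->
  forall S, (forall x, S x -> E x) -> lambda (img m S) = lambda S.
Proof.
  intros HF [Hmap [Hinj Hsurj]] Hinc Hmp S HS. apply ele_antisym.
  - apply lambda_glb. intros [l|] Hw; [|destruct (lambda (img m S)); simpl; auto].
    destruct Hw as (a & b & Hab & Hcov & Hs). simpl in Hs.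
    set (Up := fun n y => exists x, E x /\ a n <= x <= b n /\ m x <= y).
    set (Dn := fun n y => exists x, E x /\ a n <= x <= b n /\ y <= m x).
    apply (count_subadd _ (fun n y => F y /\ (Up n y /\ Dn n y)) (fun n => b n - a n)); auto.
    + intros y [x [Sx <-]]. destruct (Hcov x Sx) as [n Hn]. exists n.
      split; [apply Hmap; auto|]. split; exists x; repeat split; auto; lra.
    + intro n. destruct (Hmp (fun y => F y /\ (Up n y /\ Dn n y))) as [_ Heq].
      { apply inter_meas; auto. apply inter_meas.
        - apply upclosed_meas. intros y1 y2 H12 [x (?&?&?)]. exists x; repeat split; auto; lra.
        - apply downclosed_meas. intros y1 y2 H12 [x (?&?&?)]. exists x; repeat split; auto; lra. }
      { intros y [? _]; auto. }
      rewrite <- Heq. apply lambda_interval; [apply Hab|].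
      intros x [Ex [_ [[x1 (E1 & I1 & L1)] [x2 (E2 & I2 & L2)]]]]. split.
      * destruct (Rle_lt_dec (a n) x) as [h|h]; auto.
        assert (m x < m x1) by (apply Hinc; auto; lra). lra.
      * destruct (Rle_lt_dec x (b n)) as [h|h]; auto.
        assert (m x2 < m x) by (apply Hinc; auto; lra). lra.
  - apply lambda_glb. intros [l|] Hw; [|destruct (lambda S); simpl; auto].
    destruct Hw as (a & b & Hab & Hcov & Hs). simpl in Hs.
    apply (count_subadd _ (fun n x => E x /\ (F (m x) /\ (a n <= m x /\ m x <= b n))) (fun n => b n - a n)); auto.
    + intros x Sx. destruct (Hcov (m x)) as [n Hn]; [exists x; auto|]. exists n.
      split; [auto|]. split; [apply Hmap; auto| exact Hn].
    + intro n. destruct (Hmp (fun y => F y /\ (a n <= y /\ y <= b n))) as [_ Heq].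
      { apply inter_meas; auto. apply interval_meas. }
      { intros y [? _]; auto. }
      rewrite Heq. apply lambda_interval; [apply Hab|]. intros y [_ H]; lra.
Qed.

Theorem mainTheorem12 (E F : R -> Prop) (m : R -> R) :
  measurable E -> measurable F ->
  bijection_on E F m -> strictly_increasing_on E m ->
  measure_preserving E F m ->
  (forall minv : R -> R, inverse_on E F m minv ->
     strictly_increasing_on F minv /\ measure_preserving F E minv) /\
  MO E F m.
Proof.
  intros HE HF Hbij Hinc Hmp.
  assert (Hbij' := Hbij). destruct Hbij' as [Hmap [Hinj Hsurj]].
  assert (Key : forall minv, inverse_on E F m minv ->
     strictly_increasing_on F minv /\ measure_preserving F E minv).
  { intros minv Hinv. split.
    - intros y1 y2 F1 F2 H12. destruct (Hinv y1 F1) as [E1 M1]. destruct (Hinv y2 F2) as [E2 M2].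
      destruct (Rlt_le_dec (minv y1) (minv y2)) as [h|h]; auto.
      destruct (Rle_lt_or_eq_dec _ _ h) as [h'|h'].
      + assert (m (minv y2) < m (minv y1)) by (apply Hinc; auto). lra.
      + assert (m (minv y2) = m (minv y1)) by (rewrite h'; auto). lra.
    - intros B HB HBE.
      assert (Hset : (fun y => F y /\ B (minv y)) = img m B).
      { apply set_ext. intro y. split.
        - intros [Fy By]. exists (minv y). split; auto. apply Hinv; auto.
        - intros [x [Bx <-]]. assert (Fy : F (m x)) by (apply Hmap; auto).
          destruct (Hinv _ Fy) as [E1 M1]. split; auto.
          replace (minv (m x)) with x; auto. }
      rewrite Hset. split.
      + intro T.
        assert (L := main_lemma E F m HF Hbij Hinc Hmp).
        rewrite (HF T).
        set (S := fun x => E x /\ (T (m x) /\ F (m x))).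
        assert (HS1 : (fun x => T x /\ F x) = img m S).
        { apply set_ext; intro y; split.
          - intros [Ty Fy]. destruct (Hsurj y Fy) as [x [Ex <-]]. exists x; repeat split; auto.
          - intros [x [(Ex & Tx & Fx) <-]]; auto. }
        rewrite HS1, L by (intros x [? _]; auto).
        rewrite (HB S).
        assert (HS2 : (fun x => S x /\ B x) = (fun x => E x /\ (S x /\ B x))).
        { apply set_ext; intro; unfold S; tauto. }
        assert (HS3 : img m (fun x => S x /\ B x) = (fun y => T y /\ img m B y)).
        { apply set_ext; intro y; split.
          - intros [x [[(Ex & Tx & Fx) Bx] <-]]. split; auto. exists x; auto.
          - intros [Ty [x [Bx <-]]]. exists x. repeat split; auto. }
        assert (HS4 : img m (fun x => S x /\ ~ B x) = (fun y => (T y /\ ~ img m B y) /\ F y)).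
        { apply set_ext; intro y; split.
          - intros [x [[(Ex & Tx & Fx) Bx] <-]]. repeat split; auto.
            intros [x' [Bx' Hm]]. apply Bx. replace x with x'; auto.
          - intros [[Ty Hn] Fy]. destruct (Hsurj y Fy) as [x [Ex <-]]. exists x.
            repeat split; auto. intro Bx. apply Hn. exists x; auto. }
        rewrite <- (L (fun x => S x /\ B x)) by (intros x [[? _] _]; auto).
        rewrite <- (L (fun x => S x /\ ~ B x)) by (intros x [[? _] _]; auto).
        rewrite HS3, HS4.
        rewrite (HF (fun y => T y /\ ~ img m B y)).
        rewrite eadd_assoc. f_equal. f_equal. apply set_ext; intro y. split.
        * intros [Ty Fy]. split; auto. split; auto. intros [x [Bx <-]]. apply Fy, Hmap; auto.
        * intros [[Ty _] Fy]; auto.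
      + apply (main_lemma E F m); auto. }
  split; auto.
  set (minv := fun y => epsilon (inhabits 0) (fun x => E x /\ m x = y)).
  assert (Hinv : inverse_on E F m minv).
  { intros y Fy. unfold minv. apply epsilon_spec. apply Hsurj; auto. }
  split; [auto|]. split; [auto|]. split; [auto|].
  exists minv. split; auto. apply Key; auto.
Qed.
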